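(* Let $p\in(0,1)$, $\gamma>0$, $B>0$, $w\in\mathbb{N}$. Then: (a) for each $N\in\mathbb{N}$, $\mathcal{T}_N$ has a unique maximizer over the set $\{(\xi_1,\dots,\xi_N):\xi_j\ge0,\ \sum_{j=1}^N\xi_j\le B\}$; (b) $\mathcal{T}_N^*$ is a (non-strictly) increasing function of $N$; (c) $\lim_{N\to\infty}\mathcal{T}_N^*=\mathcal{T}_\infty^*$, and this limit is finite.
   Context: Logarithms are base 2. A nonnegative sequence $(x_j)_{j\ge1}$ is admissible if $\sum_j x_j\le B$. For an admissible sequence, $$\mathcal{T}_\infty(x_1,x_2,\dots)=\sum_{k=1}^{w}p^2(1-p)^{k-1}\frac{k}{2}\log_2\!\Big(1+\gamma\frac{B}{k}\Big)+\sum_{j=1}^{\infty}p(1-p)^{j+w-1}\frac12\log_2(1+\gamma x_j)+\sum_{k=1}^{\infty}p^2(1-p)^{k+w-1}\frac{w}{2}\log_2\!\Big(1+\gamma\frac{B-\sum_{j=1}^{k}x_j}{w}\Big),$$ and $\mathcal{T}_\infty^*$ is the supremum of $\mathcal{T}_\infty$ over all admissible sequences. For $N\in\mathbb{N}$ and $\xi_1,\dots,\xi_N\ge0$ with $\sum_{j=1}^N\xi_j\le B$, define $\mathcal{T}_N(\xi_1,\dots,\xi_N)=\mathcal{T}_\infty(\xi_1,\dots,\xi_N,0,0,\dots)$, and let $\mathcal{T}_N^*$ be the supremum of $\mathcal{T}_N$ over this set. *)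

(* Defs.v *)
From Stdlib Require Import Reals Lra.
From Coquelicot Require Import Coquelicot.
Open Scope R_scope.

Definition log2 (x : R) : R := ln x / ln 2.

Fixpoint psum (x : nat -> R) (n : nat) : R :=
  match n with O => 0 | S m => psum x m + x m end.

(* Sequences are 0-indexed: x j (j >= 0) stands for the paper's x_{j+1}. *)

Definition admissible (B : R) (x : nat -> R) : Prop :=
  (forall j, 0 <= x j) /\ (forall n, psum x n <= B).

(* T_infinity; w is the paper's w (assumed >= 1). *)
Definition Tinf (p gamma B : R) (w : nat) (x : nat -> R) : R :=
  psum (fun k => p^2 * (1-p)^k * (INR (S k) / 2)
                   * log2 (1 + gamma * B / INR (S k))) w
  + Series (fun j => p * (1-p)^(j + w) * (1/2) * log2 (1 + gamma * x j))
  + Series (fun k => p^2 * (1-p)^(k + w) * (INR w / 2)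
                   * log2 (1 + gamma * (B - psum x (S k)) / INR w)).

Definition Tinf_star (p gamma B : R) (w : nat) : Rbar :=
  Lub_Rbar (fun y => exists x, admissible B x /\ y = Tinf p gamma B w x).

(* An N-vector (xi_1..xi_N) is represented by xi : nat -> R, using only
   xi 0 .. xi (N-1); extN pads it with zeros. *)
Definition extN (N : nat) (xi : nat -> R) : nat -> R :=
  fun j => if Nat.ltb j N then xi j else 0.

Definition admissibleN (B : R) (N : nat) (xi : nat -> R) : Prop :=
  (forall j, (j < N)%nat -> 0 <= xi j) /\ psum xi N <= B.

Definition TN (p gamma B : R) (w N : nat) (xi : nat -> R) : R :=
  Tinf p gamma B w (extN N xi).

Definition TN_star (p gamma B : R) (w N : nat) : Rbar :=
  Lub_Rbar (fun y => exists xi, admissibleN B N xi /\ y = TN p gamma B w N xi).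

(* Main.v *)
Require Import Defs.
From Stdlib Require Import Reals Lra Lia ClassicalEpsilon FunctionalExtensionality.
From Coquelicot Require Import Coquelicot.
Open Scope R_scope.

Lemma ln_le_m1 y : 0 < y -> ln y <= y - 1.
Proof.
  intros Hy. destruct (Req_dec (ln y) 0) as [E|E].
  - rewrite E. assert (y = 1).
    { rewrite <- (exp_ln y Hy), E. apply exp_0. } lra.
  - pose proof (exp_ineq1 _ E). rewrite exp_ln in H by lra. lra.
Qed.

Lemma ln_ge_1m y : 0 < y -> 1 - / y <= ln y.
Proof.
  intros Hy. pose proof (ln_le_m1 (/ y) (Rinv_0_lt_compat _ Hy)).
  rewrite ln_Rinv in H by lra. lra.
Qed.

Lemma ln2_pos : 0 < ln 2.
Proof. rewrite <- ln_1. apply ln_increasing; lra. Qed.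

Lemma midln u v : 0 < u -> 0 < v ->
  (ln u + ln v)/2 + (u-v)^2/(2*(u+v)^2) <= ln ((u+v)/2).
Proof.
  intros Hu Hv.
  set (y := (u+v)/2 * ((u+v)/2) * / u * / v).
  assert (Hy : 0 < y).
  { unfold y. apply Rmult_lt_0_compat; [apply Rmult_lt_0_compat|];
    try apply Rinv_0_lt_compat; try nra. }
  assert (E : ln y = 2 * ln ((u+v)/2) - ln u - ln v).
  { unfold y. rewrite ln_mult, ln_mult, ln_mult, ln_Rinv, ln_Rinv;
    try lra; try apply Rinv_0_lt_compat; try nra;
    try apply Rmult_lt_0_compat; try apply Rinv_0_lt_compat; nra. }
  pose proof (ln_ge_1m y Hy).
  assert (E2 : 1 - / y = (u-v)^2/(u+v)^2).
  { unfold y. field. split; lra. }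
  assert (E3 : (u-v)^2/(2*(u+v)^2) = (u-v)^2/(u+v)^2 / 2) by (field; lra).
  lra.
Qed.

Lemma lnlip u v : 1 <= u -> 1 <= v -> ln u - ln v <= Rabs (u - v).
Proof.
  intros Hu Hv.
  assert (E : ln u - ln v = ln (u / v)).
  { unfold Rdiv. rewrite ln_mult, ln_Rinv; try lra. apply Rinv_0_lt_compat; lra. }
  rewrite E. pose proof (ln_le_m1 (u/v)).
  assert (0 < u / v) by (apply Rdiv_lt_0_compat; lra).
  assert (u / v - 1 = (u - v) / v) by (field; lra).
  assert ((u-v)/v <= Rabs (u-v)).
  { destruct (Rcase_abs (u-v)).
    - assert ((u-v)/v <= 0). { unfold Rdiv. apply Rmult_le_0_r; [lra|]. left; apply Rinv_0_lt_compat; lra. }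
      pose proof (Rabs_pos (u-v)); lra.
    - rewrite Rabs_right by lra. unfold Rdiv.
      rewrite <- (Rmult_1_r (u-v)) at 2. apply Rmult_le_compat_l; [lra|].
      rewrite <- Rinv_1. apply Rinv_le_contravar; lra. }
  specialize (H H0). lra.
Qed.

Lemma log2_le a b : 0 < a -> a <= b -> log2 a <= log2 b.
Proof.
  intros. unfold log2, Rdiv. apply Rmult_le_compat_r.
  left; apply Rinv_0_lt_compat, ln2_pos. apply ln_le; lra.
Qed.

Lemma log2_nonneg a : 1 <= a -> 0 <= log2 a.
Proof.
  intros. unfold log2. replace 0 with (ln 1 / ln 2) by (rewrite ln_1; field; apply Rgt_not_eq, ln2_pos).
  unfold Rdiv. apply Rmult_le_compat_r. left; apply Rinv_0_lt_compat, ln2_pos. apply ln_le; lra.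
Qed.

Lemma exs_ext (a b : nat -> R) : (forall n, a n = b n) -> ex_series a -> ex_series b.
Proof. intros H Ha. exact (ex_series_ext a b H Ha). Qed.
Lemma exs_scal c a : ex_series a -> ex_series (fun n => c * a n).
Proof. intros H. exact (ex_series_scal_l c a H). Qed.
Lemma exs_scal_r c a : ex_series a -> ex_series (fun n => a n * c).
Proof. intros H. apply (exs_ext (fun n => c * a n)). intros; ring. now apply exs_scal. Qed.
Lemma exs_plus a b : ex_series a -> ex_series b -> ex_series (fun n => a n + b n).
Proof. intros Ha Hb. exact (ex_series_plus a b Ha Hb). Qed.
Lemma exs_minus a b : ex_series a -> ex_series b -> ex_series (fun n => a n - b n).
Proof. intros Ha Hb. apply (exs_ext (fun n => a n + (-1) * b n)). intros; ring.
  apply exs_plus; auto. now apply exs_scal. Qed.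
Lemma exs_le a b : (forall n, 0 <= a n <= b n) -> ex_series b -> ex_series a.
Proof.
  intros H Hb. apply (ex_series_le a b); auto. intros n. change (norm (a n)) with (Rabs (a n)).
  rewrite Rabs_pos_eq; apply H.
Qed.

Lemma Series_zero : Series (fun _ => 0) = 0.
Proof.
  rewrite (Series_ext _ (fun n => 0 * 1)) by (intros; ring).
  rewrite Series_scal_l. ring.
Qed.

Lemma Series_nonneg a : (forall n, 0 <= a n) -> ex_series a -> 0 <= Series a.
Proof.
  intros H Ha. rewrite <- Series_zero. apply Series_le; auto. intros; split; auto; lra.
Qed.

Lemma series_mono a b : ex_series a -> ex_series b -> (forall n, a n <= b n) -> Series a <= Series b.
Proof.
  intros Ha Hb H. assert (0 <= Series (fun n => b n - a n)).
  { apply Series_nonneg. intros; specialize (H n); lra. now apply exs_minus. }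
  rewrite Series_minus in H0 by auto. lra.
Qed.

Lemma sum_f_R0_ge a j : (forall n, 0 <= a n) -> a j <= sum_f_R0 a j.
Proof.
  intros H. destruct j; simpl. lra. pose proof (cond_pos_sum a j H). lra.
Qed.

Lemma series_term a j : (forall n, 0 <= a n) -> ex_series a -> a j <= Series a.
Proof.
  intros H Ha. rewrite (Series_incr_n a (S j)) by (auto; lia). simpl pred.
  pose proof (sum_f_R0_ge a j H).
  assert (0 <= Series (fun k => a (S j + k)%nat)).
  { apply Series_nonneg. auto. apply (ex_series_incr_n a (S j)) in Ha. exact Ha. }
  lra.
Qed.

Lemma series_mono_term a b j e : ex_series a -> ex_series b -> (forall n, a n <= b n) ->
  a j + e <= b j -> Series a + e <= Series b.
Proof.
  intros Ha Hb H Hj. assert (b j - a j <= Series (fun n => b n - a n)).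
  { apply (series_term (fun n => b n - a n)). intros; specialize (H n); lra. now apply exs_minus. }
  rewrite Series_minus in H0 by auto. lra.
Qed.

Lemma lub_fin (E : R -> Prop) y0 U : E y0 -> (forall y, E y -> y <= U) ->
  exists M, Lub_Rbar E = Finite M /\ (forall y, E y -> y <= M) /\
    (forall eps, 0 < eps -> exists y, E y /\ M - eps < y).
Proof.
  intros Hy0 HU. pose proof (Lub_Rbar_correct E) as [Hub Hle].
  destruct (Lub_Rbar E) as [r| |] eqn:El.
  - exists r. split; auto. split.
    + intros y Hy. exact (Hub y Hy).
    + intros eps He. apply Classical_Prop.NNPP. intros Hn.
      assert (is_ub_Rbar E (r - eps)).
      { intros y Hy. simpl. destruct (Rle_lt_dec y (r - eps)); auto.
        exfalso. apply Hn. exists y; split; auto. }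
      specialize (Hle _ H). simpl in Hle. lra.
  - exfalso. assert (is_ub_Rbar E U) by (intros y Hy; simpl; auto).
    specialize (Hle _ H). simpl in Hle. exact Hle.
  - exfalso. specialize (Hub y0 Hy0). simpl in Hub. exact Hub.
Qed.

Lemma small_inv t : 0 < t -> exists n0, forall n, (n0 <= n)%nat -> / INR (S n) < t.
Proof.
  intros Ht. destruct (archimed_cor1 t Ht) as [N [HN HN0]]. exists N. intros n Hn.
  eapply Rle_lt_trans; [|exact HN]. apply Rinv_le_contravar. apply lt_0_INR; lia.
  apply le_INR; lia.
Qed.

Lemma le_eps a b : (forall eps, 0 < eps -> a <= b + eps) -> a <= b.
Proof.
  intros H. destruct (Rle_lt_dec a b); auto. specialize (H ((a-b)/2) ltac:(lra)). lra.
Qed.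

Lemma unif_conv N (f : nat -> nat -> R) (lim : nat -> R) :
  (forall j, (j < N)%nat -> is_lim_seq (fun n => f n j) (lim j)) ->
  forall eps, 0 < eps -> exists n0, forall n, (n0 <= n)%nat -> forall j, (j < N)%nat -> Rabs (f n j - lim j) < eps.
Proof.
  induction N; intros H eps He.
  - exists 0%nat. intros; lia.
  - destruct (IHN (fun j Hj => H j ltac:(lia)) eps He) as [n1 H1].
    pose proof (H N ltac:(lia)) as HN. apply is_lim_seq_spec in HN.
    destruct (HN (mkposreal eps He)) as [n2 H2].
    exists (Nat.max n1 n2). intros n Hn j Hj.
    destruct (Nat.eq_dec j N) as [->|Hne].
    + apply (H2 n). lia.
    + apply H1; lia.
Qed.

Lemma psum_nonneg_mono x a b : (forall j, (j < b)%nat -> 0 <= x j) -> (a <= b)%nat ->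
  psum x a <= psum x b.
Proof.
  intros H Hab. induction Hab. lra. simpl. assert (0 <= x m) by (apply H; lia).
  assert (psum x a <= psum x m) by (apply IHHab; intros; apply H; lia). lra.
Qed.

Lemma psum_nonneg x n : (forall j, (j < n)%nat -> 0 <= x j) -> 0 <= psum x n.
Proof. intros H. apply (psum_nonneg_mono x 0 n); auto; lia. Qed.

Definition mid (x y : nat -> R) : nat -> R := fun j => (x j + y j) / 2.

Lemma psum_mid x y n : psum (mid x y) n = (psum x n + psum y n) / 2.
Proof. induction n; simpl. lra. rewrite IHn. unfold mid. lra. Qed.

Lemma psum_extN N xi n : psum (extN N xi) n = psum xi (Nat.min n N).
Proof.
  induction n. reflexivity.
  change (psum (extN N xi) (S n)) with (psum (extN N xi) n + extN N xi n).
  rewrite IHn. unfold extN. destruct (Nat.ltb n N) eqn:E.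
  - apply Nat.ltb_lt in E. replace (Nat.min (S n) N) with (S n) by lia.
    replace (Nat.min n N) with n by lia. reflexivity.
  - apply Nat.ltb_ge in E. replace (Nat.min (S n) N) with N by lia.
    replace (Nat.min n N) with N by lia. lra.
Qed.

Lemma psum_close a b k e : (forall j, (j < k)%nat -> Rabs (a j - b j) <= e) ->
  Rabs (psum a k - psum b k) <= INR k * e.
Proof.
  induction k; intros H; cbn [psum]. rewrite Rminus_0_r, Rabs_R0. simpl; lra.
  rewrite S_INR.
  replace (psum a k + a k - (psum b k + b k)) with ((psum a k - psum b k) + (a k - b k)) by ring.
  eapply Rle_trans. apply Rabs_triang.
  assert (Rabs (psum a k - psum b k) <= INR k * e) by (apply IHk; intros; apply H; lia).
  assert (Rabs (a k - b k) <= e) by (apply H; lia). lra.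
Qed.

Lemma adm_bounds B x : admissible B x -> forall j, 0 <= x j <= B.
Proof.
  intros [H1 H2] j. split; auto.
  pose proof (H2 (S j)). simpl in H. pose proof (psum_nonneg x j (fun k _ => H1 k)). lra.
Qed.

Lemma adm_psum B x : admissible B x -> forall n, 0 <= psum x n <= B.
Proof. intros [H1 H2] n. split; auto. apply psum_nonneg; auto. Qed.

Lemma adm_extN B N xi : admissibleN B N xi -> admissible B (extN N xi).
Proof.
  intros [H1 H2]. split.
  - intros j. unfold extN. destruct (Nat.ltb j N) eqn:E. apply H1. now apply Nat.ltb_lt. lra.
  - intros n. rewrite psum_extN. eapply Rle_trans; [|apply H2].
    apply psum_nonneg_mono; auto. lia.
Qed.

Lemma adm_admN B N x : admissible B x -> admissibleN B N x.
Proof. intros [H1 H2]. split; auto. Qed.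

Lemma admN_mid B N x y : admissibleN B N x -> admissibleN B N y -> admissibleN B N (mid x y).
Proof.
  intros [H1 H2] [H3 H4]. split.
  - intros j Hj. unfold mid. specialize (H1 j Hj); specialize (H3 j Hj). lra.
  - rewrite psum_mid. lra.
Qed.

Lemma extN_mid N x y : extN N (mid x y) = mid (extN N x) (extN N y).
Proof.
  apply functional_extensionality. intros j. unfold extN, mid.
  destruct (Nat.ltb j N); lra.
Qed.

Lemma extN_idem N xi : extN (S N) (extN N xi) = extN N xi.
Proof.
  apply functional_extensionality. intros j. unfold extN.
  destruct (Nat.ltb j N) eqn:E; destruct (Nat.ltb j (S N)) eqn:E2; auto.
  apply Nat.ltb_lt in E. apply Nat.ltb_ge in E2. lia.
Qed.

Lemma admN_S B N xi : admissibleN B N xi -> admissibleN B (S N) (extN N xi).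
Proof.
  intros H. pose proof (adm_extN B N xi H) as [H1 H2]. split; auto.
Qed.

Lemma extN_lt N xi j : (j < N)%nat -> extN N xi j = xi j.
Proof. intros H. unfold extN. apply Nat.ltb_lt in H. now rewrite H. Qed.

Lemma extN_ge N xi j : (N <= j)%nat -> extN N xi j = 0.
Proof. intros H. unfold extN. apply Nat.ltb_ge in H. now rewrite H. Qed.

Section Main.
Variables (p gamma B : R) (w : nat).
Hypotheses (hp : 0 < p < 1) (hg : 0 < gamma) (hB : 0 < B) (hw : (1 <= w)%nat).

Definition ca (j : nat) : R := p * (1-p)^(j + w) * (1/2).
Definition cg (k : nat) : R := p^2 * (1-p)^(k + w) * (INR w / 2).
Definition fA (x : nat -> R) (j : nat) : R := ca j * log2 (1 + gamma * x j).
Definition fG (x : nat -> R) (k : nat) : R :=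
  cg k * log2 (1 + gamma * (B - psum x (S k)) / INR w).
Definition P0 : R := psum (fun k => p^2 * (1-p)^k * (INR (S k) / 2)
                   * log2 (1 + gamma * B / INR (S k))) w.
Definition LA : R := log2 (1 + gamma * B).
Definition LG : R := log2 (1 + gamma * B / INR w).

Lemma Tinf_eq x : Tinf p gamma B w x = P0 + Series (fA x) + Series (fG x).
Proof. reflexivity. Qed.

Lemma INRw_pos : 0 < INR w.
Proof. apply lt_0_INR. lia. Qed.

Lemma ca_pos j : 0 < ca j.
Proof. unfold ca. pose proof (pow_lt (1-p) (j+w)). assert (0 < 1-p) by lra. specialize (H H0). nra. Qed.
Lemma cg_pos k : 0 < cg k.
Proof. unfold cg. pose proof (pow_lt (1-p) (k+w)). assert (0 < 1-p) by lra. specialize (H H0).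
  pose proof INRw_pos. assert (0 < p^2) by nra. 
  apply Rmult_lt_0_compat. nra. lra. Qed.

Lemma ex_geom' c : ex_series (fun n => c * (1-p)^n).
Proof. apply exs_scal. apply ex_series_geom. rewrite Rabs_pos_eq; lra. Qed.

Lemma ex_ca : ex_series ca.
Proof.
  apply (exs_ext (fun n => (p * (1-p)^w * (1/2)) * (1-p)^n)).
  intros n. unfold ca. rewrite pow_add. ring. apply ex_geom'.
Qed.
Lemma ex_cg : ex_series cg.
Proof.
  apply (exs_ext (fun n => (p^2 * (1-p)^w * (INR w/2)) * (1-p)^n)).
  intros n. unfold cg. rewrite pow_add. ring. apply ex_geom'.
Qed.

Lemma fA_bounds x : admissible B x -> forall j, 0 <= fA x j <= ca j * LA.
Proof.
  intros H j. pose proof (adm_bounds B x H j). pose proof (ca_pos j). unfold fA, LA. split.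
  - apply Rmult_le_pos. lra. apply log2_nonneg. nra.
  - apply Rmult_le_compat_l. lra. apply log2_le; nra.
Qed.

Lemma fG_arg x k : admissible B x -> 1 <= 1 + gamma * (B - psum x (S k)) / INR w <= 1 + gamma * B / INR w.
Proof.
  intros H. pose proof (adm_psum B x H (S k)). pose proof INRw_pos.
  split.
  - assert (0 <= gamma * (B - psum x (S k)) / INR w).
    { apply Rdiv_le_0_compat; nra. } lra.
  - unfold Rdiv. apply Rplus_le_compat_l. apply Rmult_le_compat_r.
    left; apply Rinv_0_lt_compat; lra. nra.
Qed.

Lemma fG_bounds x : admissible B x -> forall k, 0 <= fG x k <= cg k * LG.
Proof.
  intros H k. pose proof (fG_arg x k H). pose proof (cg_pos k). unfold fG, LG. split.
  - apply Rmult_le_pos. lra. apply log2_nonneg. lra.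
  - apply Rmult_le_compat_l. lra. apply log2_le; lra.
Qed.

Lemma ex_fA x : admissible B x -> ex_series (fA x).
Proof. intros H. apply (exs_le _ (fun j => ca j * LA)). apply fA_bounds; auto. apply exs_scal_r, ex_ca. Qed.
Lemma ex_fG x : admissible B x -> ex_series (fG x).
Proof. intros H. apply (exs_le _ (fun j => cg j * LG)). apply fG_bounds; auto. apply exs_scal_r, ex_cg. Qed.

Definition Ubound : R := P0 + Series ca * LA + Series cg * LG.

Lemma Tinf_le_U x : admissible B x -> Tinf p gamma B w x <= Ubound.
Proof.
  intros H. rewrite Tinf_eq. unfold Ubound.
  rewrite <- !Series_scal_r.
  assert (Series (fA x) <= Series (fun n => ca n * LA)).
  { apply Series_le. apply fA_bounds; auto. apply exs_scal_r, ex_ca. }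
  assert (Series (fG x) <= Series (fun n => cg n * LG)).
  { apply Series_le. apply fG_bounds; auto. apply exs_scal_r, ex_cg. }
  lra.
Qed.


Lemma log2mid u v : 0 < u -> 0 < v ->
  (log2 u + log2 v)/2 + (u-v)^2/(2*(u+v)^2) / ln 2 <= log2 ((u+v)/2).
Proof.
  intros Hu Hv. pose proof (midln u v Hu Hv). pose proof ln2_pos. unfold log2.
  assert (E : (ln u / ln 2 + ln v / ln 2) / 2 + (u - v) ^ 2 / (2 * (u + v) ^ 2) / ln 2
    = ((ln u + ln v) / 2 + (u - v) ^ 2 / (2 * (u + v) ^ 2)) * / ln 2) by (field; lra).
  rewrite E. unfold Rdiv at 3. apply Rmult_le_compat_r. left; apply Rinv_0_lt_compat; lra. lra.
Qed.

Definition kap : R := gamma^2 / (8 * ln 2 * (1 + gamma*B)^2).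

Lemma kap_pos : 0 < kap.
Proof.
  unfold kap. pose proof ln2_pos. apply Rdiv_lt_0_compat. nra.
  assert (0 < (1+gamma*B)^2) by (apply pow_lt; nra). nra.
Qed.

Lemma logA_mid a b : 0 <= a <= B -> 0 <= b <= B ->
  (log2 (1 + gamma * a) + log2 (1 + gamma * b))/2 + kap * (a - b)^2
  <= log2 (1 + gamma * ((a + b)/2)).
Proof.
  intros Ha Hb. set (u := 1 + gamma*a). set (v := 1 + gamma*b).
  assert (Hu : 1 <= u) by (unfold u; nra). assert (Hv : 1 <= v) by (unfold v; nra).
  replace (1 + gamma * ((a+b)/2)) with ((u+v)/2) by (unfold u, v; field).
  pose proof (log2mid u v ltac:(lra) ltac:(lra)).
  enough (kap * (a-b)^2 <= (u - v) ^ 2 / (2 * (u + v) ^ 2) / ln 2) by lra.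
  pose proof ln2_pos.
  assert (Euv : (u-v)^2 = gamma^2 * (a-b)^2) by (unfold u, v; ring).
  rewrite Euv. unfold kap.
  assert (Huv : u + v <= 2 * (1 + gamma*B)) by (unfold u, v; nra).
  assert (H2 : 2 * (u+v)^2 * ln 2 <= 8 * ln 2 * (1 + gamma*B)^2).
  { assert ((u+v)^2 <= 4 * (1+gamma*B)^2) by nra. nra. }
  assert (H3 : 0 < 2 * (u+v)^2 * ln 2) by (assert (0 < (u+v)^2) by nra; nra).
  replace (gamma ^ 2 / (8 * ln 2 * (1 + gamma * B) ^ 2) * (a - b) ^ 2)
    with (gamma^2 * (a-b)^2 * / (8 * ln 2 * (1 + gamma * B) ^ 2)) by (field; nra).
  replace (gamma ^ 2 * (a - b) ^ 2 / (2 * (u + v) ^ 2) / ln 2)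
    with (gamma^2 * (a-b)^2 * / (2 * (u+v)^2 * ln 2)) by (field; nra).
  apply Rmult_le_compat_l. apply Rmult_le_pos; apply pow2_ge_0. apply Rinv_le_contravar; lra.
Qed.

Lemma fA_mid x y n : admissible B x -> admissible B y ->
  (fA x n + fA y n)/2 + ca n * kap * (x n - y n)^2 <= fA (mid x y) n.
Proof.
  intros Hx Hy. pose proof (logA_mid (x n) (y n) (adm_bounds B x Hx n) (adm_bounds B y Hy n)).
  pose proof (ca_pos n). unfold fA, mid.
  assert (ca n * ((log2 (1 + gamma * x n) + log2 (1 + gamma * y n)) / 2 + kap * (x n - y n) ^ 2)
    <= ca n * log2 (1 + gamma * ((x n + y n) / 2))) by (apply Rmult_le_compat_l; lra).
  lra.
Qed.

Lemma fG_mid x y k : admissible B x -> admissible B y ->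
  (fG x k + fG y k)/2 <= fG (mid x y) k.
Proof.
  intros Hx Hy. pose proof (fG_arg x k Hx). pose proof (fG_arg y k Hy).
  set (u := 1 + gamma * (B - psum x (S k)) / INR w) in *.
  set (v := 1 + gamma * (B - psum y (S k)) / INR w) in *.
  pose proof INRw_pos.
  assert (E : 1 + gamma * (B - psum (mid x y) (S k)) / INR w = (u+v)/2).
  { rewrite psum_mid. unfold u, v. field. lra. }
  unfold fG. fold u v. rewrite E.
  pose proof (log2mid u v ltac:(lra) ltac:(lra)).
  assert (0 <= (u - v) ^ 2 / (2 * (u + v) ^ 2) / ln 2).
  { pose proof ln2_pos. apply Rdiv_le_0_compat; [|lra]. apply Rdiv_le_0_compat. apply pow2_ge_0.
    assert (0 < (u+v)^2) by nra. lra. }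
  pose proof (cg_pos k).
  assert (cg k * ((log2 u + log2 v)/2) <= cg k * log2 ((u+v)/2)) by (apply Rmult_le_compat_l; lra).
  lra.
Qed.

Lemma adm_mid x y : admissible B x -> admissible B y -> admissible B (mid x y).
Proof.
  intros [H1 H2] [H3 H4]. split.
  - intros j. unfold mid. specialize (H1 j); specialize (H3 j). lra.
  - intros n. rewrite psum_mid. specialize (H2 n); specialize (H4 n). lra.
Qed.

Lemma Tinf_conc x y j : admissible B x -> admissible B y ->
  (Tinf p gamma B w x + Tinf p gamma B w y)/2 + ca j * kap * (x j - y j)^2
  <= Tinf p gamma B w (mid x y).
Proof.
  intros Hx Hy. pose proof (adm_mid x y Hx Hy) as Hm. rewrite !Tinf_eq.
  assert (HA : Series (fun n => (fA x n + fA y n)/2) + ca j * kap * (x j - y j)^2 <= Series (fA (mid x y))).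
  { apply (series_mono_term _ _ j).
    - unfold Rdiv. apply exs_scal_r. apply exs_plus; apply ex_fA; auto.
    - apply ex_fA; auto.
    - intros n. pose proof (fA_mid x y n Hx Hy). pose proof (ca_pos n). pose proof kap_pos.
      assert (0 <= ca n * kap * (x n - y n)^2).
      { apply Rmult_le_pos. nra. apply pow2_ge_0. } lra.
    - apply fA_mid; auto. }
  assert (HG : Series (fun n => (fG x n + fG y n)/2) <= Series (fG (mid x y))).
  { apply series_mono.
    - unfold Rdiv. apply exs_scal_r. apply exs_plus; apply ex_fG; auto.
    - apply ex_fG; auto.
    - intros n. apply fG_mid; auto. }
  unfold Rdiv in HA, HG. rewrite Series_scal_r, Series_plus in HA, HG by (first [apply ex_fA | apply ex_fG]; auto).
  lra.
Qed.


Lemma log2lip u v : 1 <= u -> 1 <= v -> log2 u - log2 v <= Rabs (u - v) / ln 2.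
Proof.
  intros. pose proof (lnlip u v H H0). pose proof ln2_pos. unfold log2.
  replace (ln u / ln 2 - ln v / ln 2) with ((ln u - ln v) * / ln 2) by (field; lra).
  unfold Rdiv. apply Rmult_le_compat_r. left; apply Rinv_0_lt_compat; lra. lra.
Qed.

Lemma LA_nonneg : 0 <= LA.
Proof. unfold LA. apply log2_nonneg. nra. Qed.

Definition Kc : R := gamma / ln 2 * (Series ca + Series cg / INR w).

Lemma Tinf_lip x y D : admissible B x -> admissible B y ->
  (forall j, Rabs (x j - y j) <= D) -> (forall n, Rabs (psum x n - psum y n) <= D) ->
  Tinf p gamma B w x <= Tinf p gamma B w y + Kc * D.
Proof.
  intros Hx Hy HD HP. rewrite !Tinf_eq. pose proof ln2_pos. pose proof INRw_pos.
  assert (HA : Series (fA x) <= Series (fun n => fA y n + ca n * (gamma / ln 2 * D))).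
  { apply series_mono. apply ex_fA; auto. apply exs_plus. apply ex_fA; auto. apply exs_scal_r, ex_ca.
    intros n. unfold fA. pose proof (adm_bounds B x Hx n). pose proof (adm_bounds B y Hy n).
    pose proof (log2lip (1 + gamma * x n) (1 + gamma * y n) ltac:(nra) ltac:(nra)) as HL.
    replace (1 + gamma * x n - (1 + gamma * y n)) with (gamma * (x n - y n)) in HL by ring.
    rewrite Rabs_mult, (Rabs_pos_eq gamma) in HL by lra.
    assert (gamma * Rabs (x n - y n) / ln 2 <= gamma / ln 2 * D).
    { specialize (HD n).
      replace (gamma * Rabs (x n - y n) / ln 2) with ((gamma / ln 2) * Rabs (x n - y n)) by (field; lra).
      apply Rmult_le_compat_l. apply Rdiv_le_0_compat; lra. lra. }
    pose proof (ca_pos n).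
    assert (ca n * (log2 (1 + gamma * x n) - log2 (1 + gamma * y n)) <= ca n * (gamma / ln 2 * D))
      by (apply Rmult_le_compat_l; lra).
    lra. }
  assert (HG : Series (fG x) <= Series (fun n => fG y n + cg n * (gamma / ln 2 * D / INR w))).
  { apply series_mono. apply ex_fG; auto. apply exs_plus. apply ex_fG; auto. apply exs_scal_r, ex_cg.
    intros n. unfold fG. pose proof (fG_arg x n Hx). pose proof (fG_arg y n Hy).
    pose proof (log2lip _ _ (proj1 H1) (proj1 H2)).
    replace (1 + gamma * (B - psum x (S n)) / INR w - (1 + gamma * (B - psum y (S n)) / INR w))
      with ((gamma / INR w) * (psum y (S n) - psum x (S n))) in H3 by (field; lra).
    rewrite Rabs_mult, (Rabs_pos_eq (gamma / INR w)) in H3 by (apply Rdiv_le_0_compat; lra).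
    assert (gamma / INR w * Rabs (psum y (S n) - psum x (S n)) / ln 2 <= gamma / ln 2 * D / INR w).
    { specialize (HP (S n)). rewrite Rabs_minus_sym in HP.
      replace (gamma / INR w * Rabs (psum y (S n) - psum x (S n)) / ln 2)
        with ((gamma / ln 2 / INR w) * Rabs (psum y (S n) - psum x (S n))) by (field; lra).
      replace (gamma / ln 2 * D / INR w) with ((gamma / ln 2 / INR w) * D) by (field; lra).
      apply Rmult_le_compat_l. apply Rdiv_le_0_compat; [apply Rdiv_le_0_compat|]; lra. lra. }
    pose proof (cg_pos n).
    assert (cg n * (log2 (1 + gamma * (B - psum x (S n)) / INR w) - log2 (1 + gamma * (B - psum y (S n)) / INR w)) <= cg n * (gamma / ln 2 * D / INR w))
      by (apply Rmult_le_compat_l; lra).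
    lra. }
  rewrite Series_plus, Series_scal_r in HA by (try apply ex_fA; try apply exs_scal_r; try apply ex_ca; auto).
  rewrite Series_plus, Series_scal_r in HG by (try apply ex_fG; try apply exs_scal_r; try apply ex_cg; auto).
  assert (E : Series ca * (gamma / ln 2 * D) + Series cg * (gamma / ln 2 * D / INR w) = Kc * D)
    by (unfold Kc; field; lra).
  lra.
Qed.

Definition Etail (N : nat) (j : nat) : R := if Nat.ltb j N then 0 else ca j * LA.

Lemma Etail_bounds N j : 0 <= Etail N j <= ca j * LA.
Proof.
  unfold Etail. pose proof (ca_pos j). pose proof LA_nonneg.
  destruct (Nat.ltb j N); split; try lra; apply Rmult_le_pos; lra.
Qed.

Lemma ex_Etail N : ex_series (Etail N).
Proof. apply (exs_le _ (fun j => ca j * LA)). apply Etail_bounds. apply exs_scal_r, ex_ca. Qed.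

Lemma Series_Etail N : Series (Etail N) = (1-p)^N * (Series ca * LA).
Proof.
  assert (Hs : forall k, Etail N (N + k)%nat = (1-p)^N * (ca k * LA)).
  { intros k. unfold Etail. destruct (Nat.ltb (N+k) N) eqn:E. apply Nat.ltb_lt in E; lia.
    unfold ca. replace (N + k + w)%nat with (N + (k + w))%nat by lia. rewrite pow_add. ring. }
  destruct N as [|N'].
  - rewrite (Series_ext _ (fun k => 1 * (ca k * LA))).
    rewrite Series_scal_l, Series_scal_r. simpl; ring.
    intros k. pose proof (Hs k) as Hk. simpl in Hk. rewrite Hk. reflexivity.
  - rewrite (Series_incr_n _ (S N')) by (try lia; apply ex_Etail).
    assert (Z : forall m, (m <= N')%nat -> sum_f_R0 (Etail (S N')) m = 0).
    { induction m; intros Hm; simpl.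
      - unfold Etail. simpl. reflexivity.
      - rewrite IHm by lia. unfold Etail. destruct (Nat.ltb (S m) (S N')) eqn:E. lra.
        apply Nat.ltb_ge in E; lia. }
    simpl pred. rewrite Z by lia. rewrite (Series_ext _ _ Hs).
    rewrite Series_scal_l, Series_scal_r. ring.
Qed.

Lemma Tinf_trunc x N : admissible B x ->
  Tinf p gamma B w x <= Tinf p gamma B w (extN N x) + (1-p)^N * (Series ca * LA).
Proof.
  intros Hx. pose proof (adm_extN B N x (adm_admN B N x Hx)) as He.
  rewrite !Tinf_eq.
  assert (HA : Series (fA x) <= Series (fun j => fA (extN N x) j + Etail N j)).
  { apply series_mono. apply ex_fA; auto. apply exs_plus. apply ex_fA; auto. apply ex_Etail.
    intros j. pose proof (fA_bounds x Hx j). unfold fA in *. unfold Etail, extN. destruct (Nat.ltb j N).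
    - lra.
    - rewrite Rmult_0_r, Rplus_0_r. unfold log2 at 2. rewrite ln_1.
      unfold Rdiv. rewrite Rmult_0_l, Rmult_0_r. lra. }
  assert (HG : Series (fG x) <= Series (fG (extN N x))).
  { apply series_mono. apply ex_fG; auto. apply ex_fG; auto.
    intros k. unfold fG. pose proof (cg_pos k). apply Rmult_le_compat_l. lra.
    pose proof (fG_arg x k Hx). apply log2_le. lra.
    rewrite psum_extN. pose proof INRw_pos.
    assert (psum x (Nat.min (S k) N) <= psum x (S k)).
    { apply psum_nonneg_mono. intros; apply (proj1 Hx). lia. }
    unfold Rdiv. apply Rplus_le_compat_l. apply Rmult_le_compat_r.
    left; apply Rinv_0_lt_compat; lra. nra. }
  rewrite Series_plus, Series_Etail in HA by (try apply ex_fA; try apply ex_Etail; auto).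
  lra.
Qed.


Lemma TN_conc N xi eta j : admissibleN B N xi -> admissibleN B N eta -> (j < N)%nat ->
  (TN p gamma B w N xi + TN p gamma B w N eta)/2 + ca j * kap * (xi j - eta j)^2
  <= TN p gamma B w N (mid xi eta).
Proof.
  intros H1 H2 Hj. unfold TN. rewrite extN_mid.
  pose proof (Tinf_conc (extN N xi) (extN N eta) j (adm_extN _ _ _ H1) (adm_extN _ _ _ H2)) as H.
  rewrite !extN_lt in H by auto. exact H.
Qed.

Lemma psum_zero n : psum (fun _ => 0) n = 0.
Proof. induction n; simpl; auto. rewrite IHn; ring. Qed.

Lemma admN_zero N : admissibleN B N (fun _ => 0).
Proof. split. intros; lra. rewrite psum_zero; lra. Qed.

Lemma adm_zero : admissible B (fun _ => 0).
Proof. split. intros; lra. intros; rewrite psum_zero; lra. Qed.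

Lemma fin_N N : exists M, TN_star p gamma B w N = Finite M /\
  (forall xi, admissibleN B N xi -> TN p gamma B w N xi <= M) /\
  (forall eps, 0 < eps -> exists xi, admissibleN B N xi /\ M - eps < TN p gamma B w N xi).
Proof.
  destruct (lub_fin (fun y => exists xi, admissibleN B N xi /\ y = TN p gamma B w N xi)
     (TN p gamma B w N (fun _ => 0)) Ubound) as [M [H1 [H2 H3]]].
  - exists (fun _ => 0). split; auto. apply admN_zero.
  - intros y [xi [Hxi ->]]. unfold TN. apply Tinf_le_U. apply adm_extN; auto.
  - exists M. split; [exact H1|]. split.
    + intros xi Hxi. apply H2. exists xi; auto.
    + intros eps He. destruct (H3 eps He) as [y [[xi [Hxi ->]] Hy]]. exists xi; auto.
Qed.

Lemma fin_I : exists L, Tinf_star p gamma B w = Finite L /\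
  (forall x, admissible B x -> Tinf p gamma B w x <= L) /\
  (forall eps, 0 < eps -> exists x, admissible B x /\ L - eps < Tinf p gamma B w x).
Proof.
  destruct (lub_fin (fun y => exists x, admissible B x /\ y = Tinf p gamma B w x)
     (Tinf p gamma B w (fun _ => 0)) Ubound) as [M [H1 [H2 H3]]].
  - exists (fun _ => 0). split; auto. apply adm_zero.
  - intros y [x [Hx ->]]. apply Tinf_le_U; auto.
  - exists M. split; [exact H1|]. split.
    + intros x Hx. apply H2. exists x; auto.
    + intros eps He. destruct (H3 eps He) as [y [[x [Hx ->]] Hy]]. exists x; auto.
Qed.

Lemma TN_S N xi : TN p gamma B w (S N) (extN N xi) = TN p gamma B w N xi.
Proof. unfold TN. rewrite extN_idem. reflexivity. Qed.

Lemma partb N : Rbar_le (TN_star p gamma B w N) (TN_star p gamma B w (S N)).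
Proof.
  destruct (fin_N N) as [M1 [E1 [U1 A1]]]. destruct (fin_N (S N)) as [M2 [E2 [U2 A2]]].
  rewrite E1, E2. simpl. destruct (Rle_lt_dec M1 M2) as [|Hlt]; auto.
  destruct (A1 (M1 - M2) ltac:(lra)) as [xi [Hxi Hv]].
  pose proof (U2 _ (admN_S _ _ _ Hxi)). rewrite TN_S in H. lra.
Qed.


Lemma Series_ca_nonneg : 0 <= Series ca.
Proof. apply Series_nonneg. intros; left; apply ca_pos. apply ex_ca. Qed.

Lemma partc : exists (s : nat -> R) (L : R),
     (forall N, (1 <= N)%nat -> TN_star p gamma B w N = Finite (s N)) /\
     Tinf_star p gamma B w = Finite L /\
     is_lim_seq s L.
Proof.
  destruct fin_I as [L [EL [UL AL]]].
  exists (fun N => real (TN_star p gamma B w N)), L.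
  assert (HsN : forall N, TN_star p gamma B w N = Finite (real (TN_star p gamma B w N))).
  { intros N. destruct (fin_N N) as [M [E _]]. rewrite E. reflexivity. }
  split; [intros N _; apply HsN|]. split; [exact EL|].
  set (s := fun N => real (TN_star p gamma B w N)).
  assert (Hle : forall N, s N <= L).
  { intros N. unfold s. destruct (fin_N N) as [M [E [U A]]]. rewrite E. simpl.
    destruct (Rle_lt_dec M L) as [|Hlt]; auto.
    destruct (A (M - L) ltac:(lra)) as [xi [Hxi Hv]].
    pose proof (UL _ (adm_extN _ _ _ Hxi)). unfold TN in Hv. lra. }
  assert (Hmono1 : forall N, s N <= s (S N)).
  { intros N. pose proof (partb N). unfold s. rewrite (HsN N), (HsN (S N)) in H. simpl in H. exact H. }
  assert (Hmono : forall n m, (n <= m)%nat -> s n <= s m).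
  { intros n m Hnm. induction Hnm. lra. specialize (Hmono1 m). lra. }
  assert (Hge : forall N x, admissible B x -> Tinf p gamma B w (extN N x) <= s N).
  { intros N x Hx. unfold s. destruct (fin_N N) as [M [E [U A]]]. rewrite E. simpl.
    apply (U x (adm_admN _ _ _ Hx)). }
  apply is_lim_seq_spec. intros eps.
  destruct (AL (eps/2) ltac:(destruct eps; simpl; lra)) as [x [Hx Hv]].
  set (C := Series ca * LA).
  assert (HC : 0 <= C) by (apply Rmult_le_pos; [apply Series_ca_nonneg | apply LA_nonneg]).
  assert (Hy : 0 < eps / 2 / (C + 1)) by (destruct eps; simpl; apply Rdiv_lt_0_compat; lra).
  destruct (pow_lt_1_zero (1-p) ltac:(rewrite Rabs_pos_eq; lra) _ Hy) as [N0 HN0].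
  exists N0. intros n Hn.
  specialize (HN0 N0 (le_n _)). rewrite Rabs_pos_eq in HN0 by (apply pow_le; lra).
  pose proof (Tinf_trunc x N0 Hx). fold C in H. pose proof (Hge N0 x Hx).
  assert ((1-p)^N0 * C <= eps/2/(C+1) * C) by (apply Rmult_le_compat_r; lra).
  assert (eps/2/(C+1) * C < eps / 2).
  { destruct eps as [e He]; simpl in *.
    replace (e/2/(C+1)*C) with (e/2 * (C/(C+1))) by (field; lra).
    assert (C/(C+1) < 1). { apply (Rmult_lt_reg_r (C+1)). lra. unfold Rdiv. rewrite Rmult_assoc, Rinv_l by lra. lra. }
    nra. }
  pose proof (Hmono N0 n Hn). pose proof (Hle n).
  rewrite Rabs_left1 by lra. lra.
Qed.


Lemma Kc_nonneg : 0 <= Kc.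
Proof.
  unfold Kc. pose proof ln2_pos. pose proof INRw_pos. pose proof Series_ca_nonneg.
  assert (0 <= Series cg) by (apply Series_nonneg; [intros; left; apply cg_pos | apply ex_cg]).
  apply Rmult_le_pos. apply Rdiv_le_0_compat; lra.
  assert (0 <= Series cg / INR w) by (apply Rdiv_le_0_compat; lra). lra.
Qed.

Lemma parta N : exists xi : nat -> R,
       admissibleN B N xi /\
       (forall eta, admissibleN B N eta -> TN p gamma B w N eta <= TN p gamma B w N xi) /\
       (forall eta, admissibleN B N eta ->
          (forall eta', admissibleN B N eta' ->
             TN p gamma B w N eta' <= TN p gamma B w N eta) ->
          forall j, (j < N)%nat -> eta j = xi j).
Proof.
  destruct (fin_N N) as [M [_ [Hub Happ]]].
  assert (Hseq : forall n : nat, exists xi, admissibleN B N xi /\ M - / INR (S n) < TN p gamma B w N xi).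
  { intros n. apply Happ. apply Rinv_0_lt_compat, lt_0_INR; lia. }
  set (X := fun n => proj1_sig (constructive_indefinite_description _ (Hseq n))).
  assert (HX : forall n, admissibleN B N (X n) /\ M - / INR (S n) < TN p gamma B w N (X n)).
  { intros n. unfold X. exact (proj2_sig (constructive_indefinite_description _ (Hseq n))). }
  assert (Hc : forall j, (j < N)%nat -> forall n m,
     ca j * kap * (X n j - X m j)^2 < / INR (S n) + / INR (S m)).
  { intros j Hj n m. destruct (HX n) as [An Vn]. destruct (HX m) as [Am Vm].
    pose proof (TN_conc N (X n) (X m) j An Am Hj).
    pose proof (Hub _ (admN_mid _ _ _ _ An Am)).
    assert (0 < / INR (S n)) by (apply Rinv_0_lt_compat, lt_0_INR; lia).
    assert (0 < / INR (S m)) by (apply Rinv_0_lt_compat, lt_0_INR; lia).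
    lra. }
  assert (Hcv : forall j, (j < N)%nat -> ex_finite_lim_seq (fun n => X n j)).
  { intros j Hj. apply ex_lim_seq_cauchy_corr. intros [eps He]. simpl.
    pose proof (ca_pos j). pose proof kap_pos.
    assert (Ht : 0 < ca j * kap * eps^2 / 2).
    { apply Rdiv_lt_0_compat; [|lra]. apply Rmult_lt_0_compat. nra. nra. }
    destruct (small_inv _ Ht) as [n0 Hn0]. exists n0. intros n m Hn Hm.
    specialize (Hc j Hj n m). pose proof (Hn0 n Hn). pose proof (Hn0 m Hm).
    assert (Hd : (X n j - X m j)^2 < eps^2).
    { apply (Rmult_lt_reg_l (ca j * kap)). nra. lra. }
    destruct (Rlt_le_dec (Rabs (X n j - X m j)) eps) as [|Hge]; auto.
    exfalso. rewrite <- pow2_abs in Hd. nra. }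
  set (xs := fun j => real (Lim_seq (fun n => X n j))).
  assert (Hlim : forall j, (j < N)%nat -> is_lim_seq (fun n => X n j) (xs j)).
  { intros j Hj. destruct (Hcv j Hj) as [l Hl]. unfold xs.
    rewrite (is_lim_seq_unique _ _ Hl). simpl. exact Hl. }
  pose proof (unif_conv N X xs Hlim) as Hu.
  assert (Hadm : admissibleN B N xs).
  { split.
    - intros j Hj. destruct (Rle_lt_dec 0 (xs j)) as [|Hneg]; auto. exfalso.
      destruct (Hu (- xs j) ltac:(lra)) as [n0 Hn0].
      specialize (Hn0 n0 (le_n _) j Hj). pose proof (proj1 (proj1 (HX n0)) j Hj).
      rewrite Rabs_pos_eq in Hn0 by lra. lra.
    - apply le_eps. intros eps He.
      assert (He' : 0 < eps / (INR N + 1)) by (apply Rdiv_lt_0_compat; [lra|pose proof (pos_INR N); lra]).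
      destruct (Hu _ He') as [n0 Hn0].
      pose proof (psum_close (X n0) xs N (eps / (INR N + 1))) as Hp.
      assert (Rabs (psum (X n0) N - psum xs N) <= INR N * (eps / (INR N + 1))).
      { apply Hp. intros j Hj. left. apply Hn0; auto. }
      assert (INR N * (eps / (INR N + 1)) <= eps).
      { pose proof (pos_INR N). replace (INR N * (eps / (INR N + 1))) with (eps * (INR N / (INR N + 1))) by (field; lra).
        assert (INR N / (INR N + 1) <= 1).
        { apply (Rmult_le_reg_r (INR N + 1)). lra. unfold Rdiv. rewrite Rmult_assoc, Rinv_l by lra. lra. }
        nra. }
      pose proof (proj2 (proj1 (HX n0))).
      rewrite Rabs_minus_sym in H. pose proof (Rle_abs (psum xs N - psum (X n0) N)). lra. }
  assert (Hmax : M <= TN p gamma B w N xs).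
  { apply le_eps. intros eps He. pose proof Kc_nonneg as HK.
    set (e' := eps / (2 * (Kc * (INR N + 1) + 1))).
    pose proof (pos_INR N) as HNp.
    assert (He' : 0 < e') by (unfold e'; apply Rdiv_lt_0_compat; nra).
    assert (HKe : Kc * ((INR N + 1) * e') < eps / 2).
    { unfold e'. replace (Kc * ((INR N + 1) * (eps / (2 * (Kc * (INR N + 1) + 1)))))
        with (eps / 2 * ((Kc * (INR N + 1)) / (Kc * (INR N + 1) + 1))) by (field; nra).
      assert ((Kc * (INR N + 1)) / (Kc * (INR N + 1) + 1) < 1).
      { apply (Rmult_lt_reg_r (Kc * (INR N + 1) + 1)). nra. unfold Rdiv. rewrite Rmult_assoc, Rinv_l by nra. nra. }
      nra. }
    destruct (Hu _ He') as [n0 Hn0]. destruct (small_inv (eps/2) ltac:(lra)) as [n1 Hn1].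
    set (n := Nat.max n0 n1).
    specialize (Hn0 n ltac:(unfold n; lia)). specialize (Hn1 n ltac:(unfold n; lia)).
    destruct (HX n) as [An Vn].
    assert (Hl : TN p gamma B w N (X n) <= TN p gamma B w N xs + Kc * ((INR N + 1) * e')).
    { unfold TN. apply Tinf_lip. apply adm_extN; auto. apply adm_extN; auto.
      - intros j. destruct (Nat.lt_ge_cases j N) as [Hj|Hj].
        + rewrite !extN_lt by auto. specialize (Hn0 j Hj). nra.
        + rewrite !extN_ge by auto. rewrite Rminus_0_r, Rabs_R0. nra.
      - intros m. rewrite !psum_extN.
        assert (Rabs (psum (X n) (Nat.min m N) - psum xs (Nat.min m N)) <= INR (Nat.min m N) * e').
        { apply psum_close. intros j Hj. left. apply Hn0. lia. }
        assert (INR (Nat.min m N) <= INR N) by (apply le_INR; lia). nra. }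
    lra. }
  exists xs. split; [exact Hadm|]. split.
  - intros eta Heta. pose proof (Hub _ Heta). lra.
  - intros eta Heta Hopt j Hj. destruct (Req_dec (eta j) (xs j)) as [|Hne]; auto. exfalso.
    pose proof (TN_conc N eta xs j Heta Hadm Hj).
    pose proof (Hopt _ (admN_mid _ _ _ _ Heta Hadm)).
    pose proof (Hopt _ Hadm). pose proof (Hub _ Heta).
    assert (0 < ca j * kap * (eta j - xs j)^2).
    { pose proof (ca_pos j). pose proof kap_pos.
      assert (0 < (eta j - xs j)^2) by (apply pow2_gt_0; lra). 
      apply Rmult_lt_0_compat; nra. }
    lra.
Qed.

End Main.

Theorem lemma2 (p gamma B : R) (w : nat)
  (hp : 0 < p < 1) (hgamma : 0 < gamma) (hB : 0 < B) (hw : (1 <= w)%nat) :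
  (* (a) unique maximizer of T_N over the admissible N-vectors *)
  (forall N : nat, (1 <= N)%nat ->
     exists xi : nat -> R,
       admissibleN B N xi /\
       (forall eta, admissibleN B N eta -> TN p gamma B w N eta <= TN p gamma B w N xi) /\
       (forall eta, admissibleN B N eta ->
          (forall eta', admissibleN B N eta' ->
             TN p gamma B w N eta' <= TN p gamma B w N eta) ->
          forall j, (j < N)%nat -> eta j = xi j))
  /\
  (* (b) T_N^* is nondecreasing in N *)
  (forall N : nat, (1 <= N)%nat ->
     Rbar_le (TN_star p gamma B w N) (TN_star p gamma B w (S N)))
  /\
  (* (c) T_N^* -> T_inf^*, and the limit is finite *)
  (exists (s : nat -> R) (L : R),
     (forall N, (1 <= N)%nat -> TN_star p gamma B w N = Finite (s N)) /\
     Tinf_star p gamma B w = Finite L /\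
     is_lim_seq s L).
Proof.
  split; [|split].
  - intros N _. apply parta; auto.
  - intros N _. apply partb; auto.
  - apply partc; auto.
Qed.
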